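(* Let $G$ be a connected bipartite graph whose bipartition classes have sizes $a\ge1$ and $b\ge1$, let $K$ be a finite field with $q$ elements, and let $X$ be the projective algebraic toric set parameterized by the edges of $G$. Let $X_1$, $X_2$, $X_3$ be the projective tori in $\mathbb{P}^{a-1}$, $\mathbb{P}^{b-1}$, $\mathbb{P}^{a+b-2}$ respectively. Then for every $d\ge1$, $$\delta_{X_1}(d)\,\delta_{X_2}(d)\le\delta_X(d)\le\delta_{X_3}(d).$$
   Context: For $Y$ a subset of the projective torus $\mathbb{T}^{N-1}=\{(y_1:\dots:y_N): y_i\neq0\}\subseteq\mathbb{P}^{N-1}$ over $K$, with $Y=\{P_1,\dots,P_m\}$, the code $C_Y(d)\subseteq K^m$ is the image of the space of degree-$d$ forms in $K[t_1,\dots,t_N]$ under $f\mapsto\big(f(P_1)/t_1^d(P_1),\dots,f(P_m)/t_1^d(P_m)\big)$, and $\delta_Y(d)$ is its minimum distance, i.e. the minimum number of nonzero coordinates of a nonzero vector of $C_Y(d)$. For a graph $G$ with vertices $\{1,\dots,n\}$ and edges $e_1,\dots,e_s$, the projective algebraic toric set parameterized by the edges of $G$ is the image $X\subseteq\mathbb{P}^{s-1}$ of $\mathbb{T}^{n-1}$ under the map whose $k$-th coordinate is $x_ix_j$ when $e_k=\{i,j\}$. *)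

(* Defs.v *)
From HB Require Import structures.
From mathcomp Require Import all_boot all_order all_algebra.
From mathcomp Require Import mpoly.
From Stdlib Require Import ClassicalEpsilon.
Set Implicit Arguments. Unset Strict Implicit. Unset Printing Implicit Defensive.
Import Order.TTheory GRing.Theory.
Local Open Scope ring_scope.

Section Codes.
Variable K : finFieldType.

(* Points of P^{N-1} are represented by vectors in K^N (coordinates 'I_N). *)

(* the coordinate t_1 (the first coordinate, index 0) of a vector *)
Definition firstc N (x : {ffun 'I_N -> K}) : K :=
  if @insub nat (fun k => (k < N)%N) 'I_N 0%N is Some i then x i else 0.

Definition proj_norm N (x : {ffun 'I_N -> K}) : {ffun 'I_N -> K} :=
  [ffun i => x i / firstc x].

(* The projective torus T^{N-1} in P^{N-1}: each point is represented by its
   unique representative with first coordinate 1. *)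
Definition torus N : {set {ffun 'I_N -> K}} :=
  [set x : {ffun 'I_N -> K} | [forall i, x i != 0] && (firstc x == 1)].

Definition classb (P : Prop) : bool :=
  if excluded_middle_informative P then true else false.

(* The evaluation vector of a form f on Y = {P_1,...,P_m}
   (P_k = k-th element of enum Y):  (f(P_k) / t_1^d(P_k))_k. *)
Definition evcode N (Y : {set {ffun 'I_N -> K}}) (d : nat) (f : {mpoly K[N]})
  : {ffun 'I_#|Y| -> K} :=
  [ffun k => let P : {ffun 'I_N -> K} := enum_val k in
             meval (fun i => P i) f / (firstc P) ^+ d].

Definition code N (Y : {set {ffun 'I_N -> K}}) (d : nat) : {set {ffun 'I_#|Y| -> K}} :=
  [set c | classb (exists f : {mpoly K[N]}, f \is d.-homog /\ c = evcode Y d f)].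

Definition hwt m (c : {ffun 'I_m -> K}) : nat := #|[set i | c i != 0]|.

(* Minimum distance delta_Y(d): minimum weight of a nonzero codeword
   (the default #|Y| is never smaller than any weight). *)
Definition delta N (Y : {set {ffun 'I_N -> K}}) (d : nat) : nat :=
  \big[minn/#|Y|]_(c in code Y d | c != 0) hwt c.

(* Edges {i,j} (i < j) of a graph on vertices 'I_n, listed in lexicographic
   order; this is e_1, ..., e_s. *)
Definition edge_list n (e : rel 'I_n) : seq ('I_n * 'I_n) :=
  [seq ij : 'I_n * 'I_n <- [seq (i, j) | i <- enum 'I_n, j <- enum 'I_n] |
     ((nat_of_ord ij.1 < nat_of_ord ij.2)%N && e ij.1 ij.2)].

Definition nedges n (e : rel 'I_n) : nat := size (edge_list e).

Definition edge_map n (e : rel 'I_n) (x : {ffun 'I_n -> K})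
  : {ffun 'I_(nedges e) -> K} :=
  [ffun k => x (tnth (in_tuple (edge_list e)) k).1 *
             x (tnth (in_tuple (edge_list e)) k).2].

Definition toric_set n (e : rel 'I_n) : {set {ffun 'I_(nedges e) -> K}} :=
  [set proj_norm (edge_map e x) | x in torus n].

End Codes.

Definition simple_graph n (e : rel 'I_n) : Prop :=
  (forall x y, e x y = e y x) /\ (forall x, e x x = false).

Definition connected_graph n (e : rel 'I_n) : Prop :=
  forall x y, connect e x y.

Definition bipartition n (e : rel 'I_n) (A : {set 'I_n}) : Prop :=
  forall x y, e x y -> (x \in A) != (y \in A).

(* Main.v *)
Require Import Defs.
From HB Require Import structures.
From mathcomp Require Import all_boot all_order all_algebra.
From mathcomp Require Import mpoly.
From Stdlib Require Import ClassicalEpsilon.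
Set Implicit Arguments. Unset Strict Implicit. Unset Printing Implicit Defensive.
Import Order.TTheory GRing.Theory.
Local Open Scope ring_scope.
From mathcomp Require Import ring zify.

Section Gen.
Variable K : finFieldType.

Lemma classbP (P : Prop) : classb P = true <-> P.
Proof. by rewrite /classb; case: excluded_middle_informative. Qed.

Lemma firstcE N (x : {ffun 'I_N -> K}) (i : 'I_N) : val i = 0%N -> firstc x = x i.
Proof.
move=> hi; rewrite /firstc; case: insubP => [j _ hj|].
  by congr (x _); apply: val_inj; rewrite hj hi.
by rewrite -hi ltn_ord.
Qed.

Lemma firstc_scale N (w : {ffun 'I_N -> K}) (c : K) :
  firstc [ffun i => w i * c] = firstc w * c.
Proof. by rewrite /firstc; case: insub => [i|]; rewrite ?ffunE ?mul0r. Qed.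

Lemma firstc_nz N (w : {ffun 'I_N -> K}) : (0 < N)%N -> (forall i, w i != 0) ->
  firstc w != 0.
Proof. by move=> hN hw; rewrite (@firstcE _ _ (Ordinal hN)). Qed.

Lemma proj_norm_torus N (w : {ffun 'I_N -> K}) : (0 < N)%N -> (forall i, w i != 0) ->
  proj_norm w \in torus K N.
Proof.
move=> hN hw; have hf := firstc_nz hN hw.
rewrite inE; apply/andP; split.
  by apply/forallP => i; rewrite ffunE mulf_neq0 ?invr_eq0.
by rewrite /proj_norm firstc_scale divff.
Qed.

Lemma proj_normZ N (w : {ffun 'I_N -> K}) (c : K) : c != 0 ->
  proj_norm [ffun i => w i * c] = proj_norm w.
Proof.
move=> hc; apply/ffunP => i; rewrite !ffunE firstc_scale.
by rewrite invfM mulrACA divff // mulr1.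
Qed.

Lemma meval_homog N d (f : {mpoly K[N]}) (v : 'I_N -> K) (c : K) :
  f \is d.-homog -> meval (fun i => v i * c) f = meval v f * c ^+ d.
Proof.
move=> /dhomogP hf; rewrite !mevalE big_distrl /=.
rewrite big_seq [RHS]big_seq; apply: eq_bigr => m hm.
rewrite -mulrA; congr (_ * _).
have -> : \prod_i (v i * c) ^+ m i = \prod_i v i ^+ m i * \prod_i c ^+ m i.
  by rewrite -big_split /=; apply: eq_bigr => i _; rewrite exprMn.
rewrite prodrXr; congr (_ * _ ^+ _).
by have := hf m hm; rewrite /= mdegE.
Qed.

Lemma comp_homog N M d (f : {mpoly K[N]}) (c : 'I_N -> K) (j : 'I_N -> 'I_M) :
  f \is d.-homog -> f \mPo [tuple c i *: 'X_(j i) | i < N] \is d.-homog.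
Proof.
move=> /dhomogP hf; rewrite comp_mpolyEX big_seq.
apply: rpred_sum => m /= hm; apply: rpredZ.
have -> : d = (\sum_i m i)%N by have := hf m hm; rewrite /= mdegE.
rewrite comp_mpolyX /index_enum; elim: (Finite.enum _) => [|i r IH].
  by rewrite !big_nil dhomog1.
rewrite !big_cons; apply: dhomogM => //.
rewrite tnth_mktuple; have := @dhomogMn _ _ mdeg 1 (c i *: 'X_(j i)) (m i).
rewrite mul1n; apply; apply: dhomogZ; by rewrite dhomogX /= mdeg1.
Qed.

Lemma comp_meval N M (f : {mpoly K[N]}) (c : 'I_N -> K) (j : 'I_N -> 'I_M) (v : 'I_M -> K) :
  meval v (f \mPo [tuple c i *: 'X_(j i) | i < N]) = meval (fun i => c i * v (j i)) f.
Proof.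
rewrite comp_mpoly_meval; apply: meval_eq => i.
by rewrite tnth_mktuple mevalZ mevalXU.
Qed.

Definition Wset N (Y : {set {ffun 'I_N -> K}}) (f : {mpoly K[N]}) :=
  [set P in Y | meval (fun i => P i) f != 0].

Definition normed N (Y : {set {ffun 'I_N -> K}}) := forall P, P \in Y -> firstc P = 1.

Lemma hwt_evcode N (Y : {set {ffun 'I_N -> K}}) d f : normed Y ->
  hwt (evcode Y d f) = #|Wset Y f|.
Proof.
move=> hY; rewrite /hwt.
have -> : [set i | evcode Y d f i != 0] =
          [set i | meval (fun k => (enum_val i : {ffun 'I_N -> K}) k) f != 0].
  apply/setP => i; rewrite !inE ffunE /= hY ?enum_valP // expr1n divr1 //.
set S := [set i | _].
have -> : Wset Y f = enum_val @: S.
  apply/setP => P; rewrite inE; apply/andP/imsetP => [[hP hf]|[i]].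
    by exists (enum_rank_in hP P); rewrite ?inE enum_rankK_in.
  by rewrite inE => hi ->; rewrite enum_valP.
by rewrite card_imset //; apply: enum_val_inj.
Qed.

Lemma delta_le_W_aux : True. Proof. by []. Qed.
Lemma delta_le_W N (Y : {set {ffun 'I_N -> K}}) d f : normed Y ->
  f \is d.-homog -> (0 < #|Wset Y f|)%N -> (delta Y d <= #|Wset Y f|)%N.
Proof.
move=> hY hf hW; set c := evcode Y d f.
have hc : c \in code Y d by rewrite inE; apply/classbP; exists f.
have hc0 : c != 0.
  apply: contraTneq hW => h0; rewrite -(hwt_evcode d) // -/c h0 /hwt lt0n negbK.
  by apply/eqP; apply: eq_card0 => i; rewrite !inE ffunE eqxx.
rewrite -(hwt_evcode d) // /delta.
have : c \in index_enum {ffun 'I_#|Y| -> K} by rewrite mem_index_enum.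
elim: (index_enum _) => [//|x r IH]; rewrite inE big_cons => /orP [/eqP <-|/IH h].
  by rewrite hc hc0 /= geq_minl.
case: ifP => _ //; by rewrite geq_min h orbT.
Qed.

Lemma delta_leY N (Y : {set {ffun 'I_N -> K}}) d : (delta Y d <= #|Y|)%N.
Proof.
rewrite /delta; apply: (big_ind (fun k => k <= #|Y|)%N) => //.
  by move=> x y hx _; rewrite geq_min hx.
by move=> c _; rewrite /hwt; apply: leq_trans (max_card _) _; rewrite card_ord.
Qed.

Lemma W_le_delta N (Y : {set {ffun 'I_N -> K}}) d m : normed Y -> (m <= #|Y|)%N ->
  (forall f, f \is d.-homog -> (0 < #|Wset Y f|)%N -> (m <= #|Wset Y f|)%N) ->
  (m <= delta Y d)%N.
Proof.
move=> hY hm hW; rewrite /delta; apply: (big_ind (fun k => m <= k)%N) => //.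
  by move=> x y hx hy; rewrite leq_min hx.
move=> c /andP [hc hc0]; move: hc hc0; rewrite inE => /classbP [f [hf ->]] hc0.
rewrite hwt_evcode //; apply: hW => //.
rewrite lt0n; apply: contraNneq hc0; rewrite -(hwt_evcode d) // => h.
apply/eqP/ffunP => i; rewrite [RHS]ffunE; apply/eqP; apply: contraT => hi.
have : (0 < hwt (evcode Y d f))%N by rewrite /hwt; apply/card_gt0P; exists i; rewrite inE.
by rewrite h.
Qed.

End Gen.

Section Edges.
Variables (n : nat) (e : rel 'I_n).
Hypothesis (He : simple_graph e).

Definition eu (k : 'I_(nedges e)) := (tnth (in_tuple (edge_list e)) k).1.
Definition ev (k : 'I_(nedges e)) := (tnth (in_tuple (edge_list e)) k).2.

Lemma edge_mapE (K : finFieldType) z k : edge_map e z k = z (eu k) * z (ev k) :> K.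
Proof. by rewrite ffunE. Qed.

Lemma edge_e k : e (eu k) (ev k).
Proof.
have := mem_tnth k (in_tuple (edge_list e)).
by rewrite /edge_list mem_filter => /andP [/andP [_ h] _].
Qed.

Lemma edge_idx u v : e u v ->
  exists k, (eu k = u /\ ev k = v) \/ (eu k = v /\ ev k = u).
Proof.
case: He => hsym hirr.
wlog huv : u v / (nat_of_ord u < nat_of_ord v)%N.
  move=> W huv; case: (ltngtP u v) => h.
  - exact: W.
  - have := W v u h; rewrite hsym => /(_ huv) [k hk].
    by exists k; tauto.
  - by move: huv; rewrite (val_inj h) hirr.
move=> huv'.
have hm : (u, v) \in edge_list e.
  rewrite /edge_list mem_filter /= huv huv' /=.
  by apply/allpairsP; exists (u, v); rewrite !mem_enum.
have hi : (index (u, v) (edge_list e) < nedges e)%N by rewrite index_mem.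
exists (Ordinal hi); left.
by rewrite /eu /ev (tnth_nth (u, v)) /= nth_index.
Qed.

End Edges.
Section Tree.
Variables (n : nat) (e : rel 'I_n).
Hypotheses (He : simple_graph e) (Hconn : connected_graph e).
Variable r0 : 'I_n.

Lemma exit_edge (s : seq 'I_n) p x : path e x p -> x \in s -> last x p \notin s ->
  exists u v, [/\ u \in s, v \notin s & e u v].
Proof.
elim: p x => [|y p IH] x /=; first by move=> _ ->.
case/andP => hxy hp hx hl; case: (boolP (y \in s)) => hy.
  exact: IH hp hy hl.
by exists x, y.
Qed.

Lemma build m : (0 < m <= n)%N -> exists (s : seq 'I_n) (p : nat -> nat),
  [/\ uniq s, size s = m, nth r0 s 0 = r0 &
      forall j, (0 < j < m)%N -> (p j < j)%N /\ e (nth r0 s j) (nth r0 s (p j))].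
Proof.
elim: m => [|m IH] //; move=> /andP [_ hm]; case: (posnP m) => [->|hm0].
  exists [:: r0], (fun _ => 0%N); split => //.
  by move=> j /andP [h1 h2]; case: j h1 h2 => [|[]].
have [|s [p [hu hs h0 hp]]] := IH; first by rewrite hm0 ltnW.
have [w hw] : exists w, w \notin s.
  case: (pickP (fun w => w \notin s)) => [w hw|hall]; first by exists w.
  have := uniq_leq_size (enum_uniq 'I_n) (s2 := s).
  rewrite size_enum_ord hs => h; have := h (fun w _ => negbFE (hall w)).
  by rewrite leqNgt hm.
have hr0 : r0 \in s by rewrite -h0 mem_nth // hs.
have /connectP [q hq hl] := Hconn r0 w.
have [|u [v [hu' hv huv]]] := exit_edge hq hr0; first by rewrite -hl.
exists (rcons s v), (fun j => if j == m then index u s else p j); split.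
- by rewrite rcons_uniq hv hu.
- by rewrite size_rcons hs.
- by rewrite nth_rcons hs hm0.
move=> j /andP [hj0 hj]; case: eqP => [->|/eqP hjm].
  have hi : (index u s < m)%N by rewrite -hs index_mem.
  split => //.
  rewrite !nth_rcons hs ltnn eqxx hi (nth_index r0 hu').
  by case: He => hsym _; rewrite hsym.
have hjm' : (j < m)%N by rewrite ltn_neqAle hjm -ltnS.
have [|hpj hej] := hp j; first by rewrite hj0 hjm'.
by rewrite !nth_rcons hs hjm' (ltn_trans hpj hjm').
Qed.

Lemma tree_ex N : N = n.-1 -> (0 < n)%N ->
  exists (s : nat -> 'I_n) (p : nat -> nat) (tr : 'I_N -> 'I_(nedges e)),
  [/\ s 0%N = r0, (forall v, exists2 j, (j < n)%N & v = s j),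
      (forall j, (0 < j < n)%N -> (p j < j)%N) &
      forall k : 'I_N, (eu (tr k) = s k.+1 /\ ev (tr k) = s (p k.+1)) \/
                       (eu (tr k) = s (p k.+1) /\ ev (tr k) = s k.+1)].
Proof.
move=> hN hn; have [|s [p [hu hs h0 hp]]] := @build n; first by rewrite hn leqnn.
have hk : forall k : 'I_N, (0 < k.+1 < n)%N.
  by move=> k; rewrite /= -(prednK hn) ltnS -hN ltn_ord.
have [tr htr] : exists tr : 'I_N -> 'I_(nedges e), forall k,
    (eu (tr k) = nth r0 s k.+1 /\ ev (tr k) = nth r0 s (p k.+1)) \/
    (eu (tr k) = nth r0 s (p k.+1) /\ ev (tr k) = nth r0 s k.+1).
  apply: (@fin_all_exists _ (fun _ => 'I_(nedges e)) (fun (k : 'I_N) t =>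
    (eu t = nth r0 s k.+1 /\ ev t = nth r0 s (p k.+1)) \/
    (eu t = nth r0 s (p k.+1) /\ ev t = nth r0 s k.+1))) => k.
  have [_ hek] := hp _ (hk k).
  have [t ht] := edge_idx He hek; exists t; tauto.
exists (nth r0 s), p, tr; split => //.
- move=> v.
  have hv : v \in s.
    apply: contraT => hv; have hu2 : uniq (v :: s) by rewrite /= hv hu.
    move/card_uniqP: hu2 => hc; have := max_card (mem (v :: s)).
    by rewrite hc /= hs card_ord ltnn.
  exists (index v s); last by rewrite nth_index.
  by move: hv; rewrite -index_mem hs.
- by move=> j hj; case: (hp j hj).
Qed.

End Tree.
Section Main.
Variables (K : finFieldType) (n : nat) (e : rel 'I_n) (A : {set 'I_n}).
Hypotheses (He : simple_graph e) (Hbip : bipartition e A).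
Hypotheses (hA : (0 < #|A|)%N) (hB : (0 < #|~: A|)%N).

Definition iA : 'I_#|A| := Ordinal hA.
Definition iB : 'I_#|~: A| := Ordinal hB.
Definition a0 : 'I_n := enum_val iA.
Definition b0 : 'I_n := enum_val iB.
Lemma Ha0 : a0 \in A. Proof. exact: enum_valP. Qed.
Lemma Hb0 : b0 \in ~: A. Proof. exact: enum_valP. Qed.
Definition rA v : 'I_#|A| := enum_rank_in Ha0 v.
Definition rB v : 'I_#|~: A| := enum_rank_in Hb0 v.

Definition zz (x : {ffun 'I_#|A| -> K}) (y : {ffun 'I_#|~: A| -> K}) : {ffun 'I_n -> K} :=
  [ffun v => if v \in A then x (rA v) else y (rB v)].

Lemma zzA x y v : v \in A -> zz x y v = x (rA v).
Proof. by rewrite ffunE => ->. Qed.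
Lemma zzB x y v : v \notin A -> zz x y v = y (rB v).
Proof. by rewrite ffunE => /negbTE ->. Qed.

Lemma rA_enum i : rA (enum_val i) = i.
Proof. exact: enum_valK_in. Qed.
Lemma rB_enum i : rB (enum_val i) = i.
Proof. exact: enum_valK_in. Qed.

Lemma zz_enumA x y (i : 'I_#|A|) : zz x y (enum_val i) = x i.
Proof. by rewrite zzA ?enum_valP // rA_enum. Qed.
Lemma zz_enumB x y (i : 'I_#|~: A|) : zz x y (enum_val i) = y i.
Proof.
have := enum_valP i; rewrite inE => h.
by rewrite zzB // rB_enum.
Qed.

Lemma torus_nz N (x : {ffun 'I_N -> K}) i : x \in torus K N -> x i != 0.
Proof. by rewrite inE => /andP [/forallP h _]. Qed.
Lemma torus_first N (x : {ffun 'I_N -> K}) : x \in torus K N -> firstc x = 1.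
Proof. by rewrite inE => /andP [_ /eqP]. Qed.

Lemma zz_nz x y v : x \in torus K #|A| -> y \in torus K #|~: A| -> zz x y v != 0.
Proof.
move=> hx hy; rewrite ffunE; case: ifP => _; exact: torus_nz.
Qed.

Definition ea (k : 'I_(nedges e)) := if eu k \in A then eu k else ev k.
Definition eb (k : 'I_(nedges e)) := if eu k \in A then ev k else eu k.

Lemma ea_in k : ea k \in A.
Proof.
have := Hbip (edge_e k); rewrite /ea; case h: (eu k \in A); rewrite ?h //.
by case: (ev k \in A).
Qed.
Lemma eb_notin k : eb k \notin A.
Proof.
have := Hbip (edge_e k); rewrite /eb; case h: (eu k \in A); rewrite ?h //;
by case: (ev k \in A).
Qed.

Lemma emE (z : {ffun 'I_n -> K}) (k : 'I_(nedges e)) : edge_map e z k = z (ea k) * z (eb k).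
Proof. by rewrite edge_mapE /ea /eb; case: ifP => _ //; rewrite mulrC. Qed.


Notation N3 := (#|A| + #|~: A| - 1)%N.

Lemma hN3 : N3 = n.-1.
Proof. by rewrite cardsC card_ord subn1. Qed.

Variables (s : nat -> 'I_n) (p : nat -> nat) (tr : 'I_N3 -> 'I_(nedges e)).
Hypotheses (hs0 : s 0%N = a0) (hcov : forall v, exists2 j, (j < n)%N & v = s j)
  (hp : forall j, (0 < j < n)%N -> (p j < j)%N)
  (htr : forall k : 'I_N3, (eu (tr k) = s k.+1 /\ ev (tr k) = s (p k.+1)) \/
                       (eu (tr k) = s (p k.+1) /\ ev (tr k) = s k.+1)).

Lemma alt (z z' : {ffun 'I_n -> K}) (c : K) : (forall v, z v != 0) -> (forall v, z' v != 0) ->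
  (forall k : 'I_N3, edge_map e z (tr k) = c * edge_map e z' (tr k)) ->
  forall v, z v / z' v = (if v \in A then z a0 / z' a0 else c / (z a0 / z' a0)).
Proof.
move=> hz hz' hc.
suff H : forall m j, (j <= m)%N -> (j < n)%N ->
    z (s j) / z' (s j) = (if s j \in A then z a0 / z' a0 else c / (z a0 / z' a0)).
  move=> v; have [i hi hv] := hcov v; rewrite hv; exact: (@H i i (leqnn i) hi).
elim=> [|m IH] j hjm hjn; case: (posnP j) => [->|hj0]; rewrite ?hs0 ?Ha0 //.
  by move: hjm; rewrite leqn0 => /eqP h; move: hj0; rewrite h.
have hpj := hp (j := j); rewrite hj0 hjn /= in hpj; have hpj' := hpj isT.
have hpm : (p j <= m)%N by rewrite -ltnS (leq_trans hpj').
have IHp := @IH (p j) hpm (ltn_trans hpj' hjn).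
have hkN : (j.-1 < N3)%N by rewrite hN3 -ltnS -subn1 -(ltn_add2r 1) !addn1 !subn1 !prednK // (leq_ltn_trans _ hjn).
set k := Ordinal hkN.
have hkj : k.+1 = j by rewrite /= prednK.
have hck := hc k; rewrite !edge_mapE in hck.
have hee := edge_e (tr k).
have [huw hb] : z (s j) * z (s (p j)) = c * (z' (s j) * z' (s (p j))) /\ (s j \in A) != (s (p j) \in A).
  case: (htr k) => [[h1 h2]|[h1 h2]]; rewrite hkj in h1 h2; rewrite h1 h2 in hck hee.
    by split; [rewrite hck | apply: Hbip].
  split; first by rewrite [LHS]mulrC hck [z' (s (p j)) * _]mulrC.
  by rewrite eq_sym; apply: Hbip.
have hc0 : c != 0.
  apply/eqP => h0; move: huw; rewrite h0 mul0r => /eqP.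
  by rewrite mulf_eq0 (negbTE (hz _)) (negbTE (hz _)).
have hr0 : z a0 / z' a0 != 0 by rewrite mulf_neq0 ?invr_eq0.
have hru : z (s j) / z' (s j) = c / (z (s (p j)) / z' (s (p j))).
  have hcE : c = z (s j) * z (s (p j)) / (z' (s j) * z' (s (p j))).
    by rewrite huw mulfK // mulf_neq0.
  by rewrite hcE; field; rewrite !hz !hz'.
rewrite hru IHp; move: hb; case: (s (p j) \in A); case: (s j \in A) => //= _.
by field; rewrite ?hc0 ?hz ?hz'.
Qed.

Lemma alt_all (z z' : {ffun 'I_n -> K}) (c : K) : (forall v, z v != 0) -> (forall v, z' v != 0) ->
  (forall k : 'I_N3, edge_map e z (tr k) = c * edge_map e z' (tr k)) ->
  forall k, edge_map e z k = c * edge_map e z' k.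
Proof.
move=> hz hz' hc k; rewrite !emE.
have := alt hz hz' hc (ea k); have := alt hz hz' hc (eb k).
rewrite ea_in (negbTE (eb_notin k)) => hb ha.
have hr0 : z a0 / z' a0 != 0 by rewrite mulf_neq0 ?invr_eq0.
rewrite -(divfK (hz' (ea k)) (z (ea k))) -(divfK (hz' (eb k)) (z (eb k))) ha hb.
by field; rewrite ?hr0 ?hz ?hz'.
Qed.

Lemma N3_gt0 : (0 < N3)%N.
Proof. by rewrite subn_gt0; exact: (leq_add hA hB). Qed.
Lemma n_gt0 : (0 < n)%N.
Proof. exact: (leq_ltn_trans (leq0n _) (ltn_ord a0)). Qed.
Lemma ne_gt0 : (0 < nedges e)%N.
Proof. exact: (leq_ltn_trans (leq0n _) (ltn_ord (tr (Ordinal N3_gt0)))). Qed.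

Lemma em_nz (z : {ffun 'I_n -> K}) : (forall v, z v != 0) -> forall k, edge_map e z k != 0.
Proof. by move=> hz k; rewrite edge_mapE mulf_neq0. Qed.

Definition X := toric_set K e.

Lemma X_torus P : P \in X -> P \in torus K (nedges e).
Proof.
case/imsetP => z hz ->; apply: proj_norm_torus; first exact: ne_gt0.
by apply: em_nz => v; apply: torus_nz hz.
Qed.

Lemma torus_normed N : normed (torus K N).
Proof. by move=> P; apply: torus_first. Qed.
Lemma X_normed : normed X.
Proof. by move=> P /X_torus; apply: torus_first. Qed.

Lemma pn_meval N d (F : {mpoly K[N]}) (w : {ffun 'I_N -> K}) : F \is d.-homog ->
  firstc w != 0 ->
  (meval (fun i => proj_norm w i) F != 0) = (meval (fun i => w i) F != 0).
Proof.
move=> hF hw.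
rewrite (@meval_eq _ _ _ (fun i => w i * (firstc w)^-1)); last by move=> i; rewrite ffunE.
rewrite (meval_homog _ _ hF) mulf_eq0 expf_eq0 invr_eq0 (negbTE hw) andbF orbF //.
Qed.

Lemma em_scale (w : {ffun 'I_n -> K}) c :
  edge_map e [ffun v => w v * c] = [ffun k => edge_map e w k * c ^+ 2].
Proof. by apply/ffunP => k; rewrite emE [RHS]ffunE emE !ffunE mulrACA expr2. Qed.

Lemma pn_eq N (w w' : {ffun 'I_N -> K}) : proj_norm w = proj_norm w' ->
  firstc w != 0 -> firstc w' != 0 -> forall k, w k = (firstc w / firstc w') * w' k.
Proof.
move=> h hf hf' k; have := congr1 (fun f : {ffun _ -> K} => f k) h; rewrite /= !ffunE => hk.
by rewrite -[w k](divfK hf) hk; field; rewrite hf'.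
Qed.

Definition T1 := torus K #|A|.
Definition T2 := torus K #|~: A|.
Definition T3 := torus K N3.

Definition phi x y := proj_norm (edge_map e (zz x y)).

Lemma zz_first x y : x \in T1 -> y \in T2 -> zz x y a0 = 1 /\ zz x y b0 = 1.
Proof.
move=> hx hy; rewrite /a0 /b0 zz_enumA zz_enumB.
by rewrite -(@firstcE _ _ x iA) // -(@firstcE _ _ y iB) // !torus_first.
Qed.

Lemma phi_in x y : x \in T1 -> y \in T2 -> phi x y \in X.
Proof.
move=> hx hy; have hz := fun v => @zz_nz x y v hx hy.
apply/imsetP; exists (proj_norm (zz x y)).
  by apply: proj_norm_torus => //; exact: n_gt0.
rewrite /phi (_ : edge_map e (proj_norm (zz x y)) =
   [ffun k => edge_map e (zz x y) k * (firstc (zz x y))^-1 ^+ 2]); last exact: em_scale.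
by rewrite proj_normZ // expf_neq0 // invr_eq0 firstc_nz //; exact: n_gt0.
Qed.

Lemma ratio1 (a b : K) : b != 0 -> a / b = 1 -> a = b.
Proof. by move=> hb h; rewrite -(divfK hb a) h mul1r. Qed.

Lemma phi_inj x y x' y' : x \in T1 -> y \in T2 -> x' \in T1 -> y' \in T2 ->
  phi x y = phi x' y' -> x = x' /\ y = y'.
Proof.
move=> hx hy hx' hy' h.
have hz := fun v => @zz_nz x y v hx hy; have hz' := fun v => @zz_nz x' y' v hx' hy'.
have hf := firstc_nz ne_gt0 (em_nz hz); have hf' := firstc_nz ne_gt0 (em_nz hz').
have hk := pn_eq h hf hf'.
have ha := @alt _ _ _ hz hz' (fun k => hk (tr k)).
have [h1 h2] := zz_first hx hy; have [h1' h2'] := zz_first hx' hy'.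
have hb := ha b0; have := Hb0; rewrite inE => /negbTE hb0.
rewrite hb0 h1 h1' h2 h2' !divr1 in hb.
have hc1 : firstc (edge_map e (zz x y)) / firstc (edge_map e (zz x' y')) = 1 by rewrite -hb.
have hall : forall v, zz x y v = zz x' y' v.
  move=> v; apply: ratio1; first exact: hz'.
  by rewrite ha h1 h1' !divr1 hc1; case: ifP.
split; apply/ffunP => i.
  by rewrite -(zz_enumA x y) -(zz_enumA x' y') hall.
by rewrite -(zz_enumB x y) -(zz_enumB x' y') hall.
Qed.

Definition pi (P : {ffun 'I_(nedges e) -> K}) : {ffun 'I_N3 -> K} :=
  proj_norm [ffun k : 'I_N3 => P (tr k)].

Lemma pi_in P : P \in X -> pi P \in T3.
Proof.
move/X_torus => hP; apply: proj_norm_torus; first exact: N3_gt0.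
by move=> k; rewrite ffunE torus_nz.
Qed.

Lemma pnE N (w : {ffun 'I_N -> K}) k : proj_norm w k = w k / firstc w.
Proof. by rewrite ffunE. Qed.

Lemma pn_nz N (w : {ffun 'I_N -> K}) : (0 < N)%N -> (forall k, w k != 0) ->
  forall k, proj_norm w k != 0.
Proof. by move=> hN hw k; rewrite ffunE mulf_neq0 // invr_eq0 firstc_nz. Qed.

Lemma pi_inj P P' : P \in X -> P' \in X -> pi P = pi P' -> P = P'.
Proof.
case/imsetP => z hz ->; case/imsetP => z' hz' -> h.
have hzn : forall v, z v != 0 by move=> v; apply: torus_nz hz.
have hzn' : forall v, z' v != 0 by move=> v; apply: torus_nz hz'.
have hw := em_nz hzn; have hw' := em_nz hzn'.
have hfw := firstc_nz ne_gt0 hw; have hfw' := firstc_nz ne_gt0 hw'.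
have hP := pn_nz ne_gt0 hw; have hP' := pn_nz ne_gt0 hw'.
set wP := [ffun k : 'I_N3 => proj_norm (edge_map e z) (tr k)] in h.
set wP' := [ffun k : 'I_N3 => proj_norm (edge_map e z') (tr k)] in h.
have hfP : firstc wP != 0 by apply: firstc_nz N3_gt0 _ => k; rewrite ffunE.
have hfP' : firstc wP' != 0 by apply: firstc_nz N3_gt0 _ => k; rewrite ffunE.
have hk := pn_eq h hfP hfP'.
set c1 := firstc wP / firstc wP' in hk.
have htrk : forall k : 'I_N3, edge_map e z (tr k) =
    (c1 * firstc (edge_map e z) / firstc (edge_map e z')) * edge_map e z' (tr k).
  move=> k; have := hk k; rewrite [LHS]ffunE [in RHS]ffunE !pnE => hk'.
  by rewrite -[edge_map e z (tr k)](divfK hfw) hk'; field; rewrite hfw'.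
have hall := alt_all hzn hzn' htrk.
set c2 := c1 * _ / _ in hall.
have hc2 : c2 != 0.
  apply: contraNneq (hw (tr (Ordinal N3_gt0))) => c0.
  by rewrite hall c0 mul0r.
have -> : edge_map e z = [ffun k => edge_map e z' k * c2].
  by apply/ffunP => k; rewrite [RHS]ffunE hall mulrC.
by rewrite proj_normZ.
Qed.

Definition getQ N (Q : {ffun 'I_N -> K}) (m : nat) : K :=
  if @insub nat (fun k => (k < N)%N) 'I_N m is Some i then Q i else 0.

Lemma getQ_lt N (Q : {ffun 'I_N -> K}) m (h : (m < N)%N) : getQ Q m = Q (Ordinal h).
Proof.
rewrite /getQ; case: insubP => [i _ hi|]; last by rewrite h.
by congr (Q _); apply: val_inj.
Qed.

Definition sp1 (Q : {ffun 'I_N3 -> K}) : {ffun 'I_#|A| -> K} := [ffun i : 'I_#|A| => getQ Q i].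
Definition sp2 (Q : {ffun 'I_N3 -> K}) : {ffun 'I_#|~: A| -> K} :=
  [ffun j : 'I_#|~: A| => if val j == 0%N then 1 else getQ Q (#|A|.-1 + j)].

Lemma sp_in Q : Q \in T3 -> sp1 Q \in T1 /\ sp2 Q \in T2.
Proof.
move=> hQ; split; rewrite inE; apply/andP; split.
- apply/forallP => i; rewrite ffunE.
  have hi : (i < N3)%N by have := ltn_ord i; lia.
  by rewrite (getQ_lt _ hi) torus_nz.
- rewrite (@firstcE _ _ _ iA) // ffunE /= (getQ_lt _ N3_gt0).
  by rewrite -(@firstcE _ _ _ (Ordinal N3_gt0)) // torus_first.
- apply/forallP => j; rewrite ffunE; case: ifP => [_|hj]; first by rewrite oner_eq0.
  have hi : (#|A|.-1 + j < N3)%N by have := ltn_ord j; lia.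
  by rewrite (getQ_lt _ hi) torus_nz.
- by rewrite (@firstcE _ _ _ iB) // ffunE /=.
Qed.

Lemma sp_inj Q Q' : sp1 Q = sp1 Q' -> sp2 Q = sp2 Q' -> Q = Q'.
Proof.
move=> h1 h2; apply/ffunP => k.
case: (ltnP k #|A|) => hk.
  have := congr1 (fun f : {ffun _ -> K} => f (Ordinal hk)) h1; rewrite /= !ffunE.
  by rewrite !(getQ_lt _ (ltn_ord k)) /=; congr (_ = _); congr (_ _); apply: val_inj.
have hj : ((k - #|A|.-1)%N < #|~: A|)%N by have := ltn_ord k; lia.
have := congr1 (fun f : {ffun _ -> K} => f (Ordinal hj)) h2; rewrite /= !ffunE /=.
have -> : ((k - #|A|.-1)%N == 0%N) = false by apply/eqP; lia.
have hk' : (#|A|.-1 + (k - #|A|.-1) = k)%N by lia.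
rewrite hk' !(getQ_lt _ (ltn_ord k)) => hq.
have E : Ordinal (ltn_ord k) = k by apply: val_inj.
by rewrite E in hq.
Qed.

Lemma card_X_ge : (#|T1| * #|T2| <= #|X|)%N.
Proof.
rewrite -cardsX.
have <- : #|[set phi xy.1 xy.2 | xy in setX T1 T2]| = #|setX T1 T2|.
  apply: card_in_imset => [[x y] [x' y']]; rewrite !in_setX /= => /andP [hx hy] /andP [hx' hy'] h.
  by have [-> ->] := phi_inj hx hy hx' hy' h.
apply: subset_leq_card; apply/subsetP => P /imsetP [[x y]]; rewrite in_setX => /andP [hx hy] ->.
exact: phi_in.
Qed.

Lemma card_T3_le : (#|T3| <= #|T1| * #|T2|)%N.
Proof.
rewrite -cardsX.
have <- : #|[set (sp1 Q, sp2 Q) | Q in T3]| = #|T3|.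
  by apply: card_in_imset => Q Q' _ _ [h1 h2]; apply: sp_inj.
apply: subset_leq_card; apply/subsetP => xy /imsetP [Q hQ ->].
by have [h1 h2] := sp_in hQ; rewrite in_setX h1 h2.
Qed.

Lemma piX : pi @: X = T3.
Proof.
apply/eqP; rewrite eqEcard; apply/andP; split.
  by apply/subsetP => Q /imsetP [P hP ->]; apply: pi_in.
rewrite card_in_imset; last by move=> P P' hP hP'; apply: pi_inj.
exact: leq_trans card_T3_le card_X_ge.
Qed.

Lemma upper d : (delta X d <= delta T3 d)%N.
Proof.
apply: W_le_delta; first exact: torus_normed.
  apply: leq_trans (delta_leY _ _) _.
  rewrite -piX (card_in_imset (f := pi)) //; by move=> P P' hP hP'; apply: pi_inj.
move=> F3 hF3 /card_gt0P [Q hQ].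
set F := F3 \mPo [tuple (fun _ => 1) k *: 'X_(tr k) | k < N3].
have hF : F \is d.-homog by apply: comp_homog.
have hWeq : forall P, P \in X ->
    (meval (fun i => P i) F != 0) = (meval (fun k => pi P k) F3 != 0).
  move=> P hP; rewrite comp_meval /pi (pn_meval hF3).
    by congr (_ != _); apply: meval_eq => k; rewrite ffunE mul1r.
  by apply: firstc_nz N3_gt0 _ => k; rewrite ffunE torus_nz // X_torus.
have hsub : forall P, P \in Wset X F -> P \in X.
  by move=> P; rewrite inE => /andP [].
apply: (@leq_trans #|Wset X F|).
  apply: delta_le_W => //; first exact: X_normed.
  move: hQ; rewrite inE => /andP [hQ hQF].
  move: hQ; rewrite -piX => /imsetP [P hP hQP].
  apply/card_gt0P; exists P; rewrite inE hP /= hWeq // -hQP //.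
rewrite -(card_in_imset (f := pi) (D := Wset X F)); last first.
  by move=> P P' /hsub hP /hsub hP'; apply: pi_inj.
apply: subset_leq_card; apply/subsetP => Q' /imsetP [P hP ->].
move: (hP); rewrite inE => /andP [hPX hPF].
by rewrite inE pi_in //= -hWeq.
Qed.

Lemma WsetP N (Y : {set {ffun 'I_N -> K}}) f P :
  (P \in Wset Y f) = (P \in Y) && (meval (fun i => P i) f != 0).
Proof. by rewrite /Wset in_set. Qed.

Lemma lower d : (delta T1 d * delta T2 d <= delta X d)%N.
Proof.
apply: W_le_delta; first exact: X_normed.
  by apply: leq_trans card_X_ge; apply: leq_mul; apply: delta_leY.
move=> F hF /card_gt0P [P]; rewrite WsetP => /andP [hPX hPF].
case/imsetP: (hPX) => z hz hPz.
have hzn : forall v, z v != 0 by move=> v; apply: torus_nz hz.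
have hw := em_nz hzn; have hfw := firstc_nz ne_gt0 hw.
rewrite hPz (pn_meval hF hfw) in hPF.
pose za : {ffun 'I_#|A| -> K} := [ffun i => z (enum_val i)].
pose zb : {ffun 'I_#|~: A| -> K} := [ffun i => z (enum_val i)].
have hza : forall i, za i != 0 by move=> i; rewrite ffunE.
have hzb : forall i, zb i != 0 by move=> i; rewrite ffunE.
have hfa := firstc_nz hA hza; have hfb := firstc_nz hB hzb.
set x0 := proj_norm za; set y0 := proj_norm zb.
have hx0 : x0 \in T1 by apply: proj_norm_torus.
have hy0 : y0 \in T2 by apply: proj_norm_torus.
have key : forall v, zz x0 y0 v = z v * (if v \in A then (firstc za)^-1 else (firstc zb)^-1).
  move=> v; case: (boolP (v \in A)) => hv.
    by rewrite zzA // pnE ffunE enum_rankK_in.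
  have hv' : v \in ~: A by rewrite inE.
  by rewrite zzB // pnE ffunE /rB enum_rankK_in.
set G := fun x y => meval (fun k => edge_map e (zz x y) k) F.
have hG0 : G x0 y0 != 0.
  rewrite /G (@meval_eq _ _ _ (fun k => edge_map e z k * ((firstc za)^-1 * (firstc zb)^-1))).
    by rewrite (meval_homog _ _ hF) mulf_neq0 // expf_neq0 // mulf_neq0 // invr_eq0.
  move=> k; rewrite !emE !key ea_in (negbTE (eb_notin k)).
  by rewrite mulrACA.
set g := F \mPo [tuple x0 (rA (ea k)) *: 'X_(rB (eb k)) | k < nedges e].
have hg : g \is d.-homog by apply: comp_homog.
have hgE : forall y : {ffun 'I_#|~: A| -> K}, meval (fun j => y j) g = G x0 y.
  move=> y; rewrite comp_meval /G; apply: meval_eq => k.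
  by rewrite emE zzA ?ea_in // zzB ?eb_notin.
set h := fun y : {ffun 'I_#|~: A| -> K} =>
  F \mPo [tuple y (rB (eb k)) *: 'X_(rA (ea k)) | k < nedges e].
have hh : forall y, h y \is d.-homog by move=> y; apply: comp_homog.
have hhE : forall (x : {ffun 'I_#|A| -> K}) (y : {ffun 'I_#|~: A| -> K}), meval (fun j => x j) (h y) = G x y.
  move=> x y; rewrite comp_meval /G; apply: meval_eq => k.
  by rewrite emE zzA ?ea_in // zzB ?eb_notin // mulrC.
set S2 := Wset T2 g.
have hS2 : (delta T2 d <= #|S2|)%N.
  apply: delta_le_W => //; first exact: torus_normed.
  by apply/card_gt0P; exists y0; rewrite WsetP hy0 hgE.
have hS1 : forall y, y \in S2 -> (delta T1 d <= #|Wset T1 (h y)|)%N.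
  move=> y; rewrite WsetP => /andP [hy hgy].
  apply: delta_le_W => //; first exact: torus_normed.
  by apply/card_gt0P; exists x0; rewrite WsetP hx0 hhE -hgE.
set Pr := [set yx : {ffun 'I_#|~: A| -> K} * {ffun 'I_#|A| -> K} |
             (yx.1 \in S2) && (yx.2 \in Wset T1 (h yx.1))].
have cardPr : #|Pr| = (\sum_(y in S2) #|Wset T1 (h y)|)%N.
  rewrite -sum1_card.
  rewrite (eq_bigl (fun yx => (yx.1 \in S2) && (yx.2 \in Wset T1 (h yx.1)))); last first.
    by move=> yx; rewrite in_set.
  rewrite -(pair_big_dep (fun y => y \in S2) (fun y x => x \in Wset T1 (h y)) (fun _ _ => 1%N)).
  by apply: eq_bigr => y _; rewrite sum1_card.
have hPr : (delta T1 d * delta T2 d <= #|Pr|)%N.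
  rewrite cardPr; apply: leq_trans (leq_mul (leqnn _) hS2) _.
  rewrite mulnC -sum_nat_const; exact: leq_sum.
apply: leq_trans hPr _.
have hPrT : forall yx, yx \in Pr -> (yx.2 \in T1) /\ (yx.1 \in T2).
  move=> yx; rewrite in_set => /andP [].
  by rewrite !WsetP => /andP [h1 _] /andP [h2 _].
rewrite -(card_in_imset (f := fun yx => phi yx.2 yx.1) (D := Pr)); last first.
  move=> [y x] [y' x'] /hPrT [/= hx hy] /hPrT [/= hx' hy'] /= hE.
  by have [-> ->] := phi_inj hx hy hx' hy' hE.
apply: subset_leq_card; apply/subsetP => Q /imsetP [[y x] hyx ->].
have [/= hx hy] := hPrT _ hyx.
move: hyx; rewrite in_set /= => /andP [_]; rewrite WsetP => /andP [_ hxh].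
rewrite WsetP phi_in //= /phi (pn_meval hF).
  by move: hxh; rewrite hhE.
by apply: firstc_nz ne_gt0 _; apply: em_nz => v; apply: zz_nz.
Qed.

End Main.

Theorem theorem4p4 (K : finFieldType) (n : nat) (e : rel 'I_n) (A : {set 'I_n}) :
  simple_graph e -> connected_graph e -> bipartition e A ->
  (1 <= #|A|)%N -> (1 <= #|~: A|)%N ->
  forall d : nat, (1 <= d)%N ->
    (delta (torus K #|A|) d * delta (torus K #|~: A|) d
       <= delta (toric_set K e) d)%N /\
    (delta (toric_set K e) d <= delta (torus K (#|A| + #|~: A| - 1)) d)%N.
Proof.
move=> He Hconn Hbip hA hB d hd.
have [s [p [tr [hs0 hcov hp htr]]]] :=
  tree_ex He Hconn (a0 hA) (hN3 A) (n_gt0 hA).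
split.
- exact: (lower K Hbip hB hs0 hcov hp htr d).
- exact: (upper K Hbip hB hs0 hcov hp htr d).
Qed.
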